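(* Assume each $K_n/k$ is a Galois extension and let $G=\mathrm{Gal}(K/k)$, acting on $K\subset\overline{K}$. Then for each $g\in G$ the map $g:K\to K\subset \overline{K}$ extends uniquely to a map $\overline{K}\to\overline{K}$ that is continuous with respect to the $*$-weak topology $\sigma(\overline{K},K)$ (the weakest topology making all functionals $y\mapsto\langle\xi,y\rangle$, $\xi\in K$, continuous), and these extensions define an action of $G$ on $\overline{K}$ by $*$-weakly continuous maps.
   Context: Let $k$ be a non-Archimedean local field of characteristic $0$, and let $k=K_1\subset K_2\subset\cdots$ be an increasing sequence of finite extensions, $K=\bigcup_n K_n$. Let $m_n=[K_n:k]$, $|\cdot|_n$ the normalized absolute value of $K_n$, $\|x\|=|x|_n^{1/m_n}$ for $x\in K_n$. For $n\le\nu$ and $x\in K_\nu$ put $T_n(x)=\frac{m_n}{m_\nu}\mathrm{Tr}_{K_\nu/K_n}(x)$ (independent of $\nu$); $T=T_1$. $\overline{K}$ is the set of sequences $y=(y_1,y_2,\dots)$, $y_n\in K_n$, with $y_n=T_n(y_\nu)$ for $\nu>n$, topologized by the seminorms $\|y\|_n=\|y_n\|$; $T_n(y):=y_n$, and $K$ is embedded in $\overline K$ via $x\mapsto(T_1(x),T_2(x),\dots)$. The pairing is $\langle\xi,y\rangle=T(\xi\,T_n(y))$ for $\xi\in K_n$, $y\in\overline{K}$. *)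

(* Defs.v *)
From HB Require Import structures.
From mathcomp Require Import all_boot all_order all_algebra all_field.
From mathcomp Require Import reals.
Set Implicit Arguments. Unset Strict Implicit. Unset Printing Implicit Defensive.
Import Order.TTheory GRing.Theory Num.Theory.
Local Open Scope ring_scope.

Definition nonarch_local_field_char0 (R : realType) (k : fieldType)
    (v : k -> R) : Prop :=
  [/\ (forall x, 0 <= v x /\ (v x = 0 <-> x = 0)),
      (forall x y, v (x * y) = v x * v y),
      (forall x y, v (x + y) <= Num.max (v x) (v y)),
      (exists pi : k, 0 < v pi < 1 /\
          forall x, x != 0 -> exists z : int, v x = v pi ^ z)
    & [/\ (forall u : nat -> k,
          (forall e, 0 < e -> exists N, forall m n, (N <= m)%N -> (N <= n)%N ->
                v (u m - u n) < e) ->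
          exists l, forall e, 0 < e -> exists N, forall n, (N <= n)%N ->
                v (u n - l) < e),
      (exists s : seq k, forall x, v x <= 1 -> exists2 r, r \in s & v (x - r) < 1)
    & [pchar k] =i pred0]].

Definition castL (T : nat -> Type) m m' (e : m = m') (x : T m) : T m' :=
  ecast i (T i) e x.

Section Tower.
Variables (k : fieldType) (L : nat -> fieldExtType k).
Variable f : forall n, 'AHom(L n, L n.+1).

Definition mdeg n : nat := \dim {:L n}.

Fixpoint emb (n d : nat) : 'Hom(L n, L (d + n)) :=
  match d return 'Hom(L n, L (d + n)) with
  | 0 => \1%VF
  | d'.+1 => (ahval (f (d' + n)) \o emb n d')%VF
  end.

End Tower.

Section TowerGalois.
Variables (k : fieldType) (L : nat -> splittingFieldType k).
Variable f : forall n, 'AHom(L n, L n.+1).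

(* T_n(x) = (m_n / m_{d+n}) Tr_{K_{d+n}/K_n}(x)  for x in K_{d+n};
   the relative trace over the image of K_n (the extensions are Galois)
   is galTrace, pulled back to K_n along the inclusion. *)
Definition Tr (n d : nat) (x : L (d + n)) : L n :=
  ((mdeg L n)%:R / (mdeg L (d + n))%:R : k) *:
    ((emb f n d)^-1)%VF (galTrace (limg (emb f n d)) fullv x).

Definition up (n nu : nat) (x : L n) : L nu :=
  match @idP (n <= nu)%N with
  | ReflectT h => @castL L _ _ (subnK h) (emb f n (nu - n) x)
  | ReflectF _ => 0
  end.

Arguments up n nu x : clear implicits.

Definition down (n nu : nat) (x : L nu) : L n :=
  match @idP (n <= nu)%N with
  | ReflectT h => @Tr n (nu - n) (@castL L _ _ (esym (subnK h)) x)
  | ReflectF _ => 0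
  end.

Arguments down n nu x : clear implicits.

Definition Kbar_pred (y : forall n, L n) : Prop :=
  forall n nu, (n <= nu)%N -> y n = down n nu (y nu).
Definition Kbar := {y : forall n, L n | Kbar_pred y}.

(* elements of K = union of the K_n, represented as pairs (n, x in K_n) *)
Definition Kel := {n : nat & L n}.

Definition Kequiv (a b : Kel) : Prop :=
  up (tag a) (maxn (tag a) (tag b)) (tagged a) = up (tag b) (maxn (tag a) (tag b)) (tagged b).
Definition Kadd (a b : Kel) : Kel :=
  existT L (maxn (tag a) (tag b))
    (up (tag a) (maxn (tag a) (tag b)) (tagged a) + up (tag b) (maxn (tag a) (tag b)) (tagged b)).
Definition Kmul (a b : Kel) : Kel :=
  existT L (maxn (tag a) (tag b))
    (up (tag a) (maxn (tag a) (tag b)) (tagged a) * up (tag b) (maxn (tag a) (tag b)) (tagged b)).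
Definition Kscal (c : k) : Kel := existT L 0%N (c%:A).

Definition is_Gal (g : Kel -> Kel) : Prop :=
  [/\ (forall a b, Kequiv a b -> Kequiv (g a) (g b)),
      (forall a b, Kequiv (g (Kadd a b)) (Kadd (g a) (g b))),
      (forall a b, Kequiv (g (Kmul a b)) (Kmul (g a) (g b))),
      (forall c, Kequiv (g (Kscal c)) (Kscal c))
    & ((forall a b, Kequiv (g a) (g b) -> Kequiv a b) /\
       (forall b, exists a, Kequiv (g a) b))].

(* the embedding K -> Kbar, x |-> (T_1(x), T_2(x), ...) ; T_m(x) for x in
   K_n is computed in K_{max(n,m)} *)
Definition iota (a : Kel) : forall m, L m :=
  fun m => down m (maxn (tag a) m) (up (tag a) (maxn (tag a) m) (tagged a)).

(* the scalar c of an element c%:A of K_1 = L 0 = k *)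
Definition scal0 (z : L 0) : k := coord [tuple (1 : L 0)] (@ord0 0) z.

Definition pairing (xi : Kel) (y : Kbar) : k :=
  scal0 (down 0 (tag xi) (tagged xi * sval y (tag xi))).

Section WeakTopology.
Variables (R : realType) (v : k -> R).

Definition kopen (V : k -> Prop) : Prop :=
  forall x, V x -> exists e : R, 0 < e /\ forall z, v (z - x) < e -> V z.

(* open sets of sigma(Kbar, K): the topology generated by the subbasis
   { y | <xi,y> in V }, xi in K, V open in k (weakest topology making all
   y |-> <xi, y> continuous) *)
Definition wopen (U : Kbar -> Prop) : Prop :=
  forall y, U y -> exists (m : nat) (xi : 'I_m -> Kel) (V : 'I_m -> k -> Prop),
    [/\ forall i, kopen (V i), forall i, V i (pairing (xi i) y)
      & forall z, (forall i, V i (pairing (xi i) z)) -> U z].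

Definition wcont (Phi : Kbar -> Kbar) : Prop :=
  forall U, wopen U -> wopen (fun y => U (Phi y)).

End WeakTopology.

Definition extends (g : Kel -> Kel) (Phi : Kbar -> Kbar) : Prop :=
  forall (a : Kel) (y : Kbar), sval y = iota a -> sval (Phi y) = iota (g a).

End TowerGalois.

(* Main.v *)
Require Import Defs.
From HB Require Import structures.
From mathcomp Require Import all_boot all_order all_algebra all_field all_fingroup.
From mathcomp Require Import reals.
From mathcomp Require Import ring.
From Stdlib Require Import FunctionalExtensionality ProofIrrelevance Classical ClassicalEpsilon.
Set Implicit Arguments. Unset Strict Implicit. Unset Printing Implicit Defensive.
Import Order.TTheory GRing.Theory Num.Theory.
Local Open Scope ring_scope.

Section Cast.
Variables (k : fieldType) (L : nat -> fieldExtType k).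
Local Notation castL := (@castL L _ _).

Lemma castL_id m (e : m = m) (x : L m) : castL e x = x.
Proof. by rewrite (eq_irrelevance e erefl). Qed.

Lemma castL_irr m m' (e e' : m = m') (x : L m) : castL e x = castL e' x.
Proof. by rewrite (eq_irrelevance e e'). Qed.

Lemma castLK m m' (e : m = m') (x : L m) : castL (esym e) (castL e x) = x.
Proof. by case: m' / e. Qed.

Lemma castLKV m m' (e : m = m') (x : L m') : castL e (castL (esym e) x) = x.
Proof. by case: m' / e in x *. Qed.

Lemma castL_trans m1 m2 m3 (e1 : m1 = m2) (e2 : m2 = m3) (x : L m1) :
  castL e2 (castL e1 x) = castL (etrans e1 e2) x.
Proof. by case: m3 / e2; case: m2 / e1. Qed.

End Cast.

Section Up.
Variables (k : fieldType) (L : nat -> splittingFieldType k).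
Variable f : forall n, 'AHom(L n, L n.+1).

Fixpoint embA (n d : nat) : 'AHom(L n, L (d + n)) :=
  match d return 'AHom(L n, L (d + n)) with
  | 0 => AHom (id_is_ahom (aspacef (L n)))
  | d'.+1 => comp_ahom (f (d' + n)) (embA n d')
  end.

Lemma embAE n d x : emb f n d x = embA n d x.
Proof.
elim: d => [|d IH] /=; first by rewrite !id_lfunE.
by rewrite !comp_lfunE IH.
Qed.


Local Notation castL := (@castL L _ _).
Local Notation up n nu x := (@Defs.up k L f n nu x).

Lemma castL_f a b (e : a = b) (e' : a.+1 = b.+1) (w : L a) :
  castL e' (f a w) = f b (castL e w).
Proof. by case: b / e in e' *; rewrite !castL_id. Qed.

Lemma castL_embA n nu d1 d2 (e1 : (d1 + n = nu)%N) (e2 : (d2 + n = nu)%N) x :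
  castL e1 (embA n d1 x) = castL e2 (embA n d2 x).
Proof.
have E : d1 = d2 by apply/(@addIn n); rewrite e1 e2.
by subst d2; apply: castL_irr.
Qed.

Lemma up_cast n nu d (e : (d + n = nu)%N) x : up n nu x = castL e (embA n d x).
Proof.
rewrite /Defs.up; destruct (@idP (n <= nu)%N) as [h|h]; first by rewrite embAE; apply: castL_embA.
by exfalso; apply: h; rewrite -e leq_addl.
Qed.

Lemma up_refl n x : up n n x = x.
Proof. by rewrite (@up_cast n n 0 erefl) castL_id /= id_lfunE. Qed.

Lemma up_S n nu x : (n <= nu)%N -> up n nu.+1 x = f nu (up n nu x).
Proof.
move=> h.
have e : ((nu - n).+1 + n = nu.+1)%N by rewrite addSn subnK.
rewrite (up_cast e) /= comp_lfunE (castL_f (subnK h)).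
by rewrite (up_cast (subnK h)).
Qed.

Lemma up_trans n m nu x : (n <= m)%N -> (m <= nu)%N ->
  up m nu (up n m x) = up n nu x.
Proof.
move=> hnm; elim: nu => [|nu IH] hm.
  by move: hm; rewrite leqn0 => /eqP ->; rewrite up_refl.
case: (ltngtP m nu.+1) hm => // [hlt|->] _; last by rewrite up_refl.
rewrite up_S // IH // up_S //; exact: leq_trans hnm hlt.
Qed.

Definition upA n nu (h : (n <= nu)%N) : 'AHom(L n, L nu) :=
  ecast i ('AHom(L n, L i)) (subnK h) (embA n (nu - n)).

Lemma castL_ahom n m m' (e : m = m') (F : 'AHom(L n, L m)) x :
  castL e (F x) = (ecast i ('AHom(L n, L i)) e F) x.
Proof. by case: m' / e. Qed.

Lemma up_upA n nu (h : (n <= nu)%N) x : up n nu x = upA h x.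
Proof. by rewrite (up_cast (subnK h)) castL_ahom. Qed.

Lemma up_inj n nu (h : (n <= nu)%N) x y : up n nu x = up n nu y -> x = y.
Proof. by rewrite !(up_upA h); apply: fmorph_inj. Qed.

Lemma upD n nu (h : (n <= nu)%N) x y : up n nu (x + y) = up n nu x + up n nu y.
Proof. by rewrite !(up_upA h) rmorphD. Qed.
Lemma upM n nu (h : (n <= nu)%N) x y : up n nu (x * y) = up n nu x * up n nu y.
Proof. by rewrite !(up_upA h) rmorphM. Qed.
Lemma upZ n nu (h : (n <= nu)%N) c x : up n nu (c *: x) = c *: up n nu x.
Proof. by rewrite !(up_upA h) linearZ. Qed.
Lemma up1 n nu (h : (n <= nu)%N) : up n nu 1 = 1.
Proof. by rewrite !(up_upA h) rmorph1. Qed.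

End Up.

Section TraceRoots.
Variables (k : fieldType) (Lx : splittingFieldType k).

Lemma sum_pick_uniq (T : eqType) (s : seq T) b0 (F : T -> Lx) :
  uniq s -> b0 \in s -> \sum_(b <- s) (b0 == b)%:R * F b = F b0.
Proof.
move=> us sb0; rewrite (bigD1_seq b0) //= eqxx mul1r big1 ?addr0 //.
by move=> b; rewrite eq_sym => /negbTE ->; rewrite mul0r.
Qed.

Lemma gal_sum_roots (K : {subfield Lx}) (x : Lx) (r : seq (gal_of {:Lx})) (F : Lx -> Lx) :
  r \subset (galoisG {:Lx} K) -> uniq [seq y x | y : gal_of {:Lx} <- r] ->
  minPoly K x = \prod_(b <- [seq y x | y : gal_of {:Lx} <- r]) ('X - b%:P) ->
  \sum_(t in (galoisG {:Lx} K)) F (t x) =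
  (#|(galoisG {:Lx} <<K; x>>)|)%:R * \sum_(b <- [seq y x | y : gal_of {:Lx} <- r]) F b.
Proof.
move=> sr ur Dp; set G := galoisG _ K; set H := galoisG _ <<K; x>>.
set s := [seq y x | y : gal_of {:Lx} <- r].
have memG t : t \in G -> t x \in s.
  move=> Gt; rewrite -root_prod_XsubC -Dp root_minPoly_gal ?subvf ?memvf //.
transitivity (\sum_(t in G) \sum_(b <- s) (t x == b)%:R * F b).
  by apply: eq_bigr => t Gt; rewrite sum_pick_uniq // memG.
rewrite exchange_big mulr_sumr /= !big_map; apply: eq_big_seq => rho rr.
rewrite -mulr_suml; congr (_ * _).
have Grho : rho \in G by apply: (subsetP sr).
have ->: \sum_(t in G) (t x == rho x)%:R = (#|[set t in G | t x == rho x]|)%:R :> Lx.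
  rewrite -sum1_card natr_sum [RHS]big_mkcond /= [LHS]big_mkcond /=.
  by apply: eq_bigr => t _; rewrite inE; case: (t \in G); case: (t x == rho x).
congr (_%:R); rewrite -(card_rcoset H rho); apply: eq_card => t.
have memH u : (u \in H) = (<<K; x>> <= fixedField [set u])%VS.
  by rewrite -sub1set galois_connection ?subvf.
have memG' u : (u \in G) = (K <= fixedField [set u])%VS.
  by rewrite -sub1set galois_connection ?subvf.
rewrite inE mem_rcoset memH.
apply/andP/idP => [[Gt /eqP txr]|].
  apply/FadjoinP; split.
    by rewrite -memG' groupM ?groupV.
  apply/fixedFieldP; rewrite ?memvf // => y; rewrite inE => /eqP ->.
  by rewrite galM ?memvf // txr -galM ?memvf // mulgV gal_id.
move/FadjoinP => [sKf xf].
have Gtr : (t * rho^-1)%g \in G by rewrite memG'.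
have Gt : t \in G by rewrite -(mulgKV rho t) groupM.
split => //; have /(fixedFieldP (memvf x)) := xf => /(_ (t * rho^-1)%g).
rewrite inE eqxx => /(_ isT); rewrite galM ?memvf // => e.
by apply/eqP; rewrite -{2}e -(galM (rho^-1)%g rho (memvf (t x))) mulVg gal_id.
Qed.


Definition ntr (K : {vspace Lx}) (x : Lx) : Lx :=
  - (minPoly K x)`_(adjoin_degree K x).-1 / (adjoin_degree K x)%:R.

Lemma sum1_seq (T : Type) (s : seq T) : \sum_(b <- s) (1 : Lx) = (size s)%:R.
Proof. by elim: s => [|b s IH]; rewrite ?big_nil // big_cons IH -natr1 addrC. Qed.

Lemma galTrace_ntr (K : {subfield Lx}) x :
  (forall n : nat, (0 < n)%N -> n%:R != 0 :> Lx) ->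
  galois K {:Lx} -> galTrace K {:Lx} x = (\dim_K {:Lx})%:R * ntr K x.
Proof.
move=> hc gK.
have [r [sr ur Dp]] := (galois_factors (subvf K) gK) x (memvf x).
have S1 := gal_sum_roots id sr ur Dp.
have S2 := gal_sum_roots (fun _ => 1) sr ur Dp.
rewrite sumr_const sum1_seq in S2.
rewrite galois_dim // S2 /galTrace S1 /ntr.
set s := [seq _ | _ <- r] in S1 S2 Dp *.
have ds : adjoin_degree K x = size s.
  by apply: succn_inj; rewrite -size_minPoly Dp size_prod_XsubC.
have s0 : (size s != 0)%N by rewrite -ds /adjoin_degree.
rewrite ds Dp coefPn_prod_XsubC // opprK.
have := hc (size s); rewrite lt0n s0 => /(_ isT); move: ((size s)%:R) => d dn0.
by field.
Qed.

End TraceRoots.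

Section NtrMorph.
Variables (k : fieldType) (L1 L2 : splittingFieldType k).

Lemma ntr_in (K : {subfield L1}) x : ntr K x \in K.
Proof.
rewrite /ntr rpredM ?rpredN ?rpredV ?rpred_nat //.
exact: (polyOverP (minPolyOver K x)).
Qed.

Lemma ntr_id (K : {subfield L1}) x : x \in K -> ntr K x = x.
Proof.
move=> Kx; have := adjoin_deg_eq1 K x; rewrite Kx => /eqP; rewrite /ntr => ->.
rewrite (minPoly_XsubC Kx) coefB coefX coefC /= sub0r opprK divr1.
by [].
Qed.

Lemma ntr_ahom (s : 'AHom(L1, L2)) (K : {subfield L1}) x :
  s (ntr K x) = ntr (s @: K)%AS (s x).
Proof.
rewrite /ntr -map_minPoly adjoin_degree_aimg coef_map fmorph_div rmorphN.
by rewrite rmorph_nat.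
Qed.

End NtrMorph.

Section Down.
Variables (k : fieldType) (L : nat -> splittingFieldType k).
Variable f : forall n, 'AHom(L n, L n.+1).
Hypothesis hchar : forall m : nat, (0 < m)%N -> m%:R != 0 :> k.
Hypothesis hgal : forall n, galois 1 {:L n}.

Local Notation castL := (@castL L _ _).
Local Notation up n nu x := (@Defs.up k L f n nu x).
Local Notation down n nu x := (@Defs.down k L f n nu x).
Local Notation embA := (embA f).

Lemma Lchar n m : (0 < m)%N -> m%:R != 0 :> L n.
Proof.
move=> m0; have -> : m%:R = (m%:R : k) *: (1 : L n) by rewrite scaler_nat.
rewrite scaler_eq0 negb_or hchar //.
exact: oner_neq0.
Qed.

Lemma Tr_formula n d x :
  Tr f x = (embA n d)^-1%VF (ntr (embA n d @: fullv)%AS x).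
Proof.
have Eemb : emb f n d = embA n d by apply/lfunP => y; rewrite embAE.
rewrite /Tr Eemb; set phi := embA n d; set E := (phi @: fullv)%AS.
have gE : galois E fullv.
  by apply: (galoisS _ (hgal _)); rewrite sub1v subvf.
rewrite galTrace_ntr //; last by move=> m; apply: Lchar.
have nZ (m : nat) (w : L (d + n)) : m%:R * w = (m%:R : k) *: w.
  by rewrite scaler_nat mulr_natl.
rewrite nZ linearZ scalerA.
have dE : \dim E = mdeg L n.
  by rewrite /E /= limg_dim_eq // (eqP (AHom_lker0 _)) capv0.
have dF : mdeg L (d + n) = (\dim_E {:L (d + n)} * mdeg L n)%N.
  by rewrite -dE /mdeg -dim_sup_field ?subvf.
rewrite dF natrM.
have h1 : (mdeg L n)%:R != 0 :> k by apply: hchar; rewrite /mdeg adim_gt0.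
have h2 : (\dim_E {:L (d + n)})%:R != 0 :> k.
  apply: hchar; rewrite divn_gt0 ?adim_gt0 //; exact: dimvS (subvf _).
move: h1 h2; set a := (mdeg L n)%:R; set b := (\dim_E _)%:R => h1 h2.
have -> : a / (b * a) * b = 1.
  by rewrite mulrAC [b * a]mulrC divff // mulf_neq0.
by rewrite scale1r.
Qed.


Lemma ntr_cast n m m' (e : m = m') (F : 'AHom(L n, L m)) (y : L m') :
  F^-1%VF (ntr (F @: fullv)%AS (castL (esym e) y)) =
  (ecast i ('AHom(L n, L i)) e F)^-1%VF
     (ntr ((ecast i ('AHom(L n, L i)) e F) @: fullv)%AS y).
Proof. by case: m' / e in y *. Qed.

Lemma down_upA n nu (h : (n <= nu)%N) x :
  down n nu x = (upA f h)^-1%VF (ntr (upA f h @: fullv)%AS x).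
Proof.
rewrite /Defs.down; destruct (@idP (n <= nu)%N) as [h'|h']; last by [].
by rewrite Tr_formula ntr_cast (bool_irrelevance h' h).
Qed.

Lemma upA_in n nu (h : (n <= nu)%N) x : upA f h x \in (upA f h @: fullv)%VS.
Proof. by rewrite memv_img ?memvf. Qed.

Lemma upA_K n nu (h : (n <= nu)%N) x : (upA f h)^-1%VF (upA f h x) = x.
Proof. by rewrite lker0_lfunK ?AHom_lker0. Qed.

Lemma down_up n nu x : (n <= nu)%N -> down n nu (up n nu x) = x.
Proof.
move=> h; rewrite down_upA (up_upA f h) ntr_id ?upA_K //; exact: upA_in.
Qed.

Lemma upA_trans n m nu (h1 : (n <= m)%N) (h2 : (m <= nu)%N) (h3 : (n <= nu)%N) x :
  upA f h2 (upA f h1 x) = upA f h3 x.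
Proof. by rewrite -!up_upA up_trans. Qed.

Lemma down_compat n N nu z : (n <= N)%N -> (N <= nu)%N ->
  down n nu (up N nu z) = down n N z.
Proof.
move=> h1 h2; have h3 := leq_trans h1 h2.
rewrite (down_upA h3) (down_upA h1) (up_upA f h2).
have Eimg : (upA f h3 @: fullv)%VS = (upA f h2 @: (upA f h1 @: fullv))%VS.
  rewrite -limg_comp; congr (_ @: _)%VS; apply/lfunP => y.
  by rewrite comp_lfunE (upA_trans h1 h2 h3).
have -> : ntr (upA f h3 @: fullv)%AS (upA f h2 z) =
          ntr (upA f h2 @: (upA f h1 @: fullv))%AS (upA f h2 z).
  by rewrite /= Eimg.
rewrite -ntr_ahom.
have /memv_imgP [u _ ->] := ntr_in (upA f h1 @: fullv)%AS z.
by rewrite (upA_trans h1 h2 h3) !upA_K.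
Qed.


Lemma down_sigma n nu (h : (n <= nu)%N) (s : 'AHom(L nu, L nu)) (t : 'AHom(L n, L n)) :
  (forall x, s (upA f h x) = upA f h (t x)) ->
  forall x, down n nu (s x) = t (down n nu x).
Proof.
move=> st x; rewrite !(down_upA h).
have tfull : (t @: fullv)%VS = fullv by apply: lker0_limgf; apply: AHom_lker0.
have Eimg : (s @: (upA f h @: fullv))%VS = (upA f h @: fullv)%VS.
  rewrite -limg_comp -{2}tfull -limg_comp; congr (_ @: _)%VS; apply/lfunP => y.
  by rewrite !comp_lfunE st.
have -> : ntr (upA f h @: fullv)%AS (s x) = ntr (s @: (upA f h @: fullv))%AS (s x).
  by rewrite /= Eimg.
rewrite -ntr_ahom.
have /memv_imgP [u _ ->] := ntr_in (upA f h @: fullv)%AS x.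
by rewrite st !upA_K.
Qed.

Lemma castL_add m m' (e : m = m') (x y : L m) : castL e (x + y) = castL e x + castL e y.
Proof. by case: m' / e. Qed.

Lemma downD n nu x y : down n nu (x + y) = down n nu x + down n nu y.
Proof.
rewrite /Defs.down; destruct (@idP (n <= nu)%N) as [h|h]; last by rewrite addr0.
by rewrite castL_add /Tr raddfD linearD scalerDr.
Qed.

Lemma downB n nu x y : down n nu (x - y) = down n nu x - down n nu y.
Proof.
apply/eqP; rewrite eq_sym subr_eq -downD subrK //.
Qed.

End Down.

Section Val.
Variables (R : realType) (k : fieldType) (v : k -> R).
Hypothesis v0 : forall x, 0 <= v x /\ (v x = 0 <-> x = 0).
Hypothesis vM : forall x y, v (x * y) = v x * v y.
Hypothesis vU : forall x y, v (x + y) <= Num.max (v x) (v y).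

Lemma v1 : v 1 = 1.
Proof.
have h : v 1 * v 1 = v 1 by rewrite -vM mulr1.
have n0 : v 1 != 0 by apply/eqP => /(proj2 (v0 1)).1 /eqP; rewrite oner_eq0.
by apply: (mulIf n0); rewrite h mul1r.
Qed.

Lemma vN x : v (- x) = v x.
Proof.
have h : v (-1) ^+ 2 = 1 by rewrite expr2 -vM mulrNN mulr1 v1.
have : v (-1) == 1.
  move/eqP: h; rewrite sqrf_eq1 => /orP [//|/eqP e].
  by have := (v0 (-1)).1; rewrite e ler0N1.
by move/eqP => e; rewrite -mulN1r vM e mul1r.
Qed.

Lemma vsub x y : v (x - y) = v (y - x).
Proof. by rewrite -opprB vN. Qed.

Lemma ball_open c e : kopen v (fun w => v (w - c) < e).
Proof.
move=> x hx; exists e; split.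
  by apply: le_lt_trans hx; exact: (v0 _).1.
move=> z hz; have := vU (z - x) (x - c); rewrite addrA subrK => h.
by apply: (le_lt_trans h); rewrite gt_max hz hx.
Qed.

Lemma balls_disj c1 c2 w : v (w - c1) < v (c1 - c2) -> v (w - c2) < v (c1 - c2) -> False.
Proof.
move=> h1 h2; have := vU (c1 - w) (w - c2); rewrite addrA subrK => h.
have : v (c1 - c2) < v (c1 - c2).
  by apply: (le_lt_trans h); rewrite gt_max -vsub h1 h2.
by rewrite ltxx.
Qed.

End Val.

Section Uniq.
Variables (k : fieldType) (L : nat -> splittingFieldType k).
Variable f : forall n, 'AHom(L n, L n.+1).
Hypothesis hchar : forall m : nat, (0 < m)%N -> m%:R != 0 :> k.
Hypothesis hgal : forall n, galois 1 {:L n}.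

Local Notation up n nu x := (@Defs.up k L f n nu x).
Local Notation down n nu x := (@Defs.down k L f n nu x).
Local Notation Kb := (Kbar f).

Lemma Kbar_eq (y z : Kb) : (forall n, sval y n = sval z n) -> y = z.
Proof.
case: y z => y hy [z hz] /= e.
have E : y = z by apply: functional_extensionality_dep.
by subst z; rewrite (proof_irrelevance _ hy hz).
Qed.

Lemma down_refl n x : down n n x = x.
Proof. by have := @down_up k L f hchar hgal n n x (leqnn n); rewrite up_refl. Qed.

Lemma iota_N N (x : L N) m :
  Defs.iota f (existT L N x) m = if (m <= N)%N then down m N x else up N m x.
Proof.
rewrite /Defs.iota /=; case: leqP => h.
  by rewrite up_refl.
by rewrite down_refl.
Qed.

Lemma trunc_eq (y : Kb) N m : (m <= N)%N -> Defs.iota f (existT L N (sval y N)) m = sval y m.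
Proof. by move=> h; rewrite iota_N h -(svalP y). Qed.

Lemma trunc_pred (y : Kb) N : Kbar_pred f (Defs.iota f (existT L N (sval y N))).
Proof.
move=> n nu hnnu; rewrite !iota_N.
case: (leqP nu N) => hnuN.
  by rewrite (leq_trans hnnu hnuN) -!(svalP y) // (leq_trans hnnu hnuN).
case: (leqP n N) => hnN.
  by rewrite (down_compat f hchar hgal) // ltnW.
by rewrite -(up_trans f _ (ltnW hnN) hnnu) (down_up f hchar hgal).
Qed.

Definition trunc (y : Kb) N : Kb := exist _ _ (trunc_pred y N).

Lemma trunc_pairing (y : Kb) N xi : (tag xi <= N)%N -> pairing xi (trunc y N) = pairing xi y.
Proof. by move=> h; rewrite /pairing /= trunc_eq. Qed.

Lemma scal0B (x y : L 0) : scal0 (x - y) = scal0 x - scal0 y.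
Proof. by rewrite /scal0 linearB. Qed.

Lemma scal01 : scal0 (1 : L 0) = 1.
Proof.
have := @coord_free _ _ 1 [tuple (1 : L 0)] ord0 ord0.
rewrite seq1_free oner_neq0 eqxx => /(_ isT) /= h.
exact: h.
Qed.

Lemma down01 n : down 0 n (1 : L n) = 1.
Proof.
by rewrite -(up1 f (leq0n n)) (down_up f hchar hgal _ (leq0n n)).
Qed.

Lemma separate (y z : Kb) : y <> z -> exists xi, pairing xi y <> pairing xi z.
Proof.
move=> ne.
have [n hn] : exists n, sval y n <> sval z n.
  apply: NNPP => hn; apply: ne; apply: Kbar_eq => n.
  by apply: NNPP => h; apply: hn; exists n.
have d0 : sval y n - sval z n != 0 by rewrite subr_eq0; apply/eqP.
exists (existT L n (sval y n - sval z n)^-1) => e.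
have : pairing (existT L n (sval y n - sval z n)^-1) y -
       pairing (existT L n (sval y n - sval z n)^-1) z = 0 by rewrite e subrr.
rewrite /pairing /= -scal0B -(downB f) -mulrBr mulVf //.
by rewrite down01 scal01 => /eqP; rewrite oner_eq0.
Qed.


Variables (R : realType) (v : k -> R).
Hypothesis v0 : forall x, 0 <= v x /\ (v x = 0 <-> x = 0).
Hypothesis vM : forall x y, v (x * y) = v x * v y.
Hypothesis vU : forall x y, v (x + y) <= Num.max (v x) (v y).

Lemma wopen_pair xi c e : wopen v (fun w : Kb => v (pairing xi w - c) < e).
Proof.
move=> w hw; exists 1%N, (fun _ => xi), (fun _ t => v (t - c) < e); split => //.
  by move=> _; apply: ball_open.
by move=> z /(_ ord0).
Qed.

Lemma ext_unique g (Phi Psi : Kb -> Kb) :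
  wcont v Phi -> wcont v Psi -> extends g Phi -> extends g Psi ->
  forall y, Phi y = Psi y.
Proof.
move=> cPhi cPsi ePhi ePsi y; apply: NNPP => ne.
have [xi hxi] := separate ne.
set c1 := pairing xi (Phi y); set c2 := pairing xi (Psi y).
set e := v (c1 - c2).
have e0 : 0 < e.
  rewrite lt_neqAle (v0 _).1 andbT eq_sym; apply/eqP => /(proj1 (v0 _).2) /eqP.
  by rewrite subr_eq0 => /eqP.
have v00 : v 0 = 0 by apply/(proj2 (v0 0).2).
have [m1 [xi1 [V1 [oV1 yV1 hV1]]]] := cPhi (fun w => v (pairing xi w - c1) < e) (@wopen_pair xi c1 e) y
  (ltac:(by rewrite /= ?subrr v00)).
have [m2 [xi2 [V2 [oV2 yV2 hV2]]]] := cPsi (fun w => v (pairing xi w - c2) < e) (@wopen_pair xi c2 e) y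
  (ltac:(by rewrite /= ?subrr v00)).
set N := maxn (\max_(i < m1) tag (xi1 i)) (\max_(i < m2) tag (xi2 i)).
set z := trunc y N.
have z1 : v (pairing xi (Phi z) - c1) < e.
  apply: hV1 => i; rewrite trunc_pairing //.
  exact: leq_trans (@leq_bigmax _ (fun i => tag (xi1 i)) i) (leq_maxl _ _).
have z2 : v (pairing xi (Psi z) - c2) < e.
  apply: hV2 => i; rewrite trunc_pairing //.
  exact: leq_trans (@leq_bigmax _ (fun i => tag (xi2 i)) i) (leq_maxr _ _).
have ez : Phi z = Psi z.
  by apply: Kbar_eq => n; rewrite (ePhi _ z erefl) (ePsi _ z erefl).
by rewrite ez in z1; apply: (balls_disj v0 vM vU z1 z2).
Qed.

End Uniq.

Definition mkLin (k : fieldType) (V W : vectType k) (h : V -> W) (hl : linear h)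
  : {linear V -> W} := HB.pack h (GRing.isLinear.Build k V W *:%R h hl).

Section KelTheory.
Variables (k : fieldType) (L : nat -> splittingFieldType k).
Variable f : forall n, 'AHom(L n, L n.+1).

Local Notation up n nu x := (@Defs.up k L f n nu x).
Local Notation Keq := (Kequiv f).
Local Notation val a M := (up (tag a) M (tagged a)).

Lemma Kequiv_at (a b : Kel L) M : (tag a <= M)%N -> (tag b <= M)%N ->
  Keq a b <-> val a M = val b M.
Proof.
move=> ha hb; have hP : (maxn (tag a) (tag b) <= M)%N by rewrite geq_max ha hb.
rewrite /Kequiv; split => [e|e].
  by rewrite -(up_trans f _ (leq_maxl _ _) hP) e (up_trans f _ (leq_maxr _ _) hP).
apply: (@up_inj k L f _ _ hP); rewrite (up_trans f _ (leq_maxl _ _) hP).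
by rewrite (up_trans f _ (leq_maxr _ _) hP).
Qed.

Lemma Keq_refl a : Keq a a.
Proof. by []. Qed.

Lemma Keq_sym a b : Keq a b -> Keq b a.
Proof.
move=> e; apply/(Kequiv_at (leq_maxr (tag a) (tag b)) (leq_maxl (tag a) (tag b))).
exact/esym.
Qed.

Lemma Keq_trans a b c : Keq a b -> Keq b c -> Keq a c.
Proof.
set M := maxn (maxn (tag a) (tag b)) (tag c).
have ha : (tag a <= M)%N by rewrite !leq_max leqnn.
have hb : (tag b <= M)%N by rewrite !leq_max leqnn orbT.
have hc : (tag c <= M)%N by rewrite !leq_max leqnn orbT.
move=> /(Kequiv_at ha hb) e1 /(Kequiv_at hb hc) e2.
by apply/(Kequiv_at ha hc); rewrite e1.
Qed.

Lemma val_Kadd a b M : (tag a <= M)%N -> (tag b <= M)%N ->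
  val (Kadd f a b) M = val a M + val b M.
Proof.
move=> ha hb; have hP : (maxn (tag a) (tag b) <= M)%N by rewrite geq_max ha hb.
rewrite /= (upD f hP) (up_trans f _ (leq_maxl _ _) hP).
by rewrite (up_trans f _ (leq_maxr _ _) hP).
Qed.

Lemma val_Kmul a b M : (tag a <= M)%N -> (tag b <= M)%N ->
  val (Kmul f a b) M = val a M * val b M.
Proof.
move=> ha hb; have hP : (maxn (tag a) (tag b) <= M)%N by rewrite geq_max ha hb.
rewrite /= (upM f hP) (up_trans f _ (leq_maxl _ _) hP).
by rewrite (up_trans f _ (leq_maxr _ _) hP).
Qed.

Lemma val_Kscal c M : val (Kscal L c) M = c%:A.
Proof. by rewrite /= (upZ f (leq0n M)) (up1 f (leq0n M)). Qed.

Lemma Kadd_congr a a' b b' : Keq a a' -> Keq b b' -> Keq (Kadd f a b) (Kadd f a' b').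
Proof.
set M := maxn (maxn (tag a) (tag a')) (maxn (tag b) (tag b')).
have ha : (tag a <= M)%N by rewrite !leq_max leqnn.
have ha' : (tag a' <= M)%N by rewrite !leq_max leqnn !orbT.
have hb : (tag b <= M)%N by rewrite !leq_max leqnn !orbT.
have hb' : (tag b' <= M)%N by rewrite !leq_max leqnn !orbT.
move=> /(Kequiv_at ha ha') e1 /(Kequiv_at hb hb') e2.
apply/(Kequiv_at (M := M)); rewrite ?geq_max ?ha ?hb ?ha' ?hb' //.
by rewrite !val_Kadd // e1 e2.
Qed.

Lemma Kmul_congr a a' b b' : Keq a a' -> Keq b b' -> Keq (Kmul f a b) (Kmul f a' b').
Proof.
set M := maxn (maxn (tag a) (tag a')) (maxn (tag b) (tag b')).
have ha : (tag a <= M)%N by rewrite !leq_max leqnn.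
have ha' : (tag a' <= M)%N by rewrite !leq_max leqnn !orbT.
have hb : (tag b <= M)%N by rewrite !leq_max leqnn !orbT.
have hb' : (tag b' <= M)%N by rewrite !leq_max leqnn !orbT.
move=> /(Kequiv_at ha ha') e1 /(Kequiv_at hb hb') e2.
apply/(Kequiv_at (M := M)); rewrite ?geq_max ?ha ?hb ?ha' ?hb' //.
by rewrite !val_Kmul // e1 e2.
Qed.

End KelTheory.

Section GalAct.
Variables (k : fieldType) (L : nat -> splittingFieldType k).
Variable f : forall n, 'AHom(L n, L n.+1).
Hypothesis hchar : forall m : nat, (0 < m)%N -> m%:R != 0 :> k.
Hypothesis hgal : forall n, galois 1 {:L n}.
Variable g : Kel L -> Kel L.
Hypothesis gG : is_Gal f g.
Hypothesis hd1 : \dim {:L 0} = 1%N.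

Local Notation up n nu x := (@Defs.up k L f n nu x).
Local Notation down n nu x := (@Defs.down k L f n nu x).
Local Notation Keq := (Kequiv f).
Local Notation val a M := (up (tag a) M (tagged a)).

Lemma g_resp a b : Keq a b -> Keq (g a) (g b).
Proof. by move: gG; rewrite /is_Gal; case=> h _ _ _ _; apply: h. Qed.
Lemma g_add a b : Keq (g (Kadd f a b)) (Kadd f (g a) (g b)).
Proof. by move: gG; rewrite /is_Gal; case=> _ h _ _ _; apply: h. Qed.
Lemma g_mul a b : Keq (g (Kmul f a b)) (Kmul f (g a) (g b)).
Proof. by move: gG; rewrite /is_Gal; case=> _ _ h _ _; apply: h. Qed.
Lemma g_scal c : Keq (g (Kscal L c)) (Kscal L c).
Proof. by move: gG; rewrite /is_Gal; case=> _ _ _ h _; apply: h. Qed.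
Lemma g_inj a b : Keq (g a) (g b) -> Keq a b.
Proof. by move: gG; rewrite /is_Gal; case=> _ _ _ _ [h _]; apply: h. Qed.

Fixpoint Kpoly (cs : seq k) (a : Kel L) : Kel L :=
  match cs with
  | [::] => Kscal L 0
  | c :: cs' => Kadd f (Kmul f (Kpoly cs' a) a) (Kscal L c)
  end.

Lemma tag_Kpoly cs a : (tag (Kpoly cs a) <= tag a)%N.
Proof.
elim: cs => [|c cs IH] //=; rewrite geq_max leq0n andbT geq_max IH leqnn //.
Qed.

Lemma val_Kpoly cs a M : (tag a <= M)%N ->
  val (Kpoly cs a) M = (map_poly (in_alg (L M)) (Poly cs)).[val a M].
Proof.
move=> ha; elim: cs => [|c cs IH].
  by rewrite /= (val_Kscal f) scale0r rmorph0 horner0.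
have h1 : (tag (Kpoly cs a) <= M)%N := leq_trans (tag_Kpoly cs a) ha.
have h2 : (tag (Kmul f (Kpoly cs a) a) <= M)%N by rewrite /= geq_max h1 ha.
rewrite -[Kpoly (c :: cs) a]/(Kadd f (Kmul f (Kpoly cs a) a) (Kscal L c)).
rewrite (val_Kadd f h2) // (val_Kmul f h1 ha) IH (val_Kscal f).
rewrite (_ : Poly (c :: cs) = cons_poly c (Poly cs)) //.
rewrite cons_poly_def rmorphD rmorphM /= map_polyX map_polyC.
by rewrite hornerD hornerMX hornerC.
Qed.

Lemma Kpoly_congr cs a b : Keq a b -> Keq (Kpoly cs a) (Kpoly cs b).
Proof.
move=> e; elim: cs => [|c cs IH] //=.
by apply: Kadd_congr => //; apply: Kmul_congr.
Qed.

Lemma g_Kpoly cs a : Keq (g (Kpoly cs a)) (Kpoly cs (g a)).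
Proof.
elim: cs => [|c cs IH] /=; first exact: g_scal.
apply: Keq_trans (g_add _ _) _; apply: Kadd_congr; last exact: g_scal.
apply: Keq_trans (g_mul _ _) _; apply: Kmul_congr => //.
Qed.


Lemma Keq_level n (x y : L n) : Keq (existT L n x) (existT L n y) <-> x = y.
Proof.
split => [/(@Kequiv_at _ _ f (existT L n x) (existT L n y) n (leqnn n) (leqnn n))|->]; last exact: Keq_refl.
by rewrite /= !up_refl.
Qed.

Lemma sigma_ex n (x : L n) : exists z : L n, Keq (g (existT L n x)) (existT L n z).
Proof.
have /polyOver1P [q Dq] := minPolyOver 1 x.
set a := existT L n x.
have z0 : Keq (Kpoly q a) (Kscal L 0).
  apply/(@Kequiv_at _ _ f (Kpoly q a) (Kscal L 0) n (tag_Kpoly q a) (leq0n n)).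
  rewrite val_Kpoly // (val_Kscal f) scale0r polyseqK /= up_refl -Dq.
  exact: minPolyxx.
have e1 : Keq (Kpoly q (g a)) (Kscal L 0).
  apply: Keq_trans (Keq_sym (g_Kpoly q a)) _.
  by apply: Keq_trans (g_resp z0) (g_scal 0).
set b := g a; set M := maxn n (tag b).
have hn : (n <= M)%N := leq_maxl _ _.
have hb : (tag b <= M)%N := leq_maxr _ _.
have : (map_poly (in_alg (L M)) q).[val b M] = 0.
  move/(@Kequiv_at _ _ f (Kpoly q b) (Kscal L 0) M (leq_trans (tag_Kpoly q b) hb) (leq0n M)): e1.
  by rewrite val_Kpoly // (val_Kscal f) scale0r polyseqK.
have [r [_ _ Dp]] := (galois_factors (subvf 1%AS) (hgal n)) x (memvf x).
have -> : map_poly (in_alg (L M)) q = map_poly (upA f hn) (minPoly 1 x).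
  rewrite Dq -map_poly_comp; apply: eq_map_poly => c /=.
  by rewrite linearZ /= rmorph1.
rewrite Dp map_prod_XsubC -(big_map (upA f hn) xpredT (fun u => 'X - u%:P)).
move/rootP; rewrite root_prod_XsubC => /mapP [u _ Du].
exists u; apply/(@Kequiv_at _ _ f b (existT L n u) M hb hn).
by rewrite Du -up_upA.
Qed.


Definition sig n (x : L n) : L n := proj1_sig (constructive_indefinite_description _ (sigma_ex x)).

Lemma sig_spec n (x : L n) : Keq (g (existT L n x)) (existT L n (sig x)).
Proof. exact: (proj2_sig (constructive_indefinite_description _ (sigma_ex x))). Qed.

Lemma pt_add n (x y : L n) : Keq (existT L n (x + y)) (Kadd f (existT L n x) (existT L n y)).
Proof.
apply/(@Kequiv_at _ _ f (existT L n _) (Kadd f (existT L n x) (existT L n y)) n (leqnn n) (eq_leq (maxnn n))).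
by rewrite (val_Kadd f) //= !up_refl.
Qed.

Lemma pt_mul n (x y : L n) : Keq (existT L n (x * y)) (Kmul f (existT L n x) (existT L n y)).
Proof.
apply/(@Kequiv_at _ _ f (existT L n _) (Kmul f (existT L n x) (existT L n y)) n (leqnn n) (eq_leq (maxnn n))).
by rewrite (val_Kmul f) //= !up_refl.
Qed.

Lemma pt_scal n c : Keq (existT L n (c%:A : L n)) (Kscal L c).
Proof.
apply/(@Kequiv_at _ _ f (existT L n (c%:A : L n)) (Kscal L c) n (leqnn n) (leq0n n)).
by rewrite (val_Kscal f) /= up_refl.
Qed.

Lemma sigD n (x y : L n) : sig (x + y) = sig x + sig y.
Proof.
apply/Keq_level.
apply: Keq_trans (Keq_sym (sig_spec _)) _.
apply: Keq_trans (g_resp (pt_add x y)) _.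
apply: Keq_trans (g_add _ _) _.
apply: Keq_trans (Kadd_congr (sig_spec x) (sig_spec y)) _.
exact: Keq_sym (pt_add _ _).
Qed.

Lemma sigM n (x y : L n) : sig (x * y) = sig x * sig y.
Proof.
apply/Keq_level.
apply: Keq_trans (Keq_sym (sig_spec _)) _.
apply: Keq_trans (g_resp (pt_mul x y)) _.
apply: Keq_trans (g_mul _ _) _.
apply: Keq_trans (Kmul_congr (sig_spec x) (sig_spec y)) _.
exact: Keq_sym (pt_mul _ _).
Qed.

Lemma sigA n c : sig (c%:A : L n) = c%:A.
Proof.
apply/Keq_level.
apply: Keq_trans (Keq_sym (sig_spec _)) _.
apply: Keq_trans (g_resp (pt_scal n c)) _.
apply: Keq_trans (g_scal _) _.
exact: Keq_sym (pt_scal _ _).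
Qed.

Lemma sig1 n : sig (1 : L n) = 1.
Proof. by have := sigA n 1; rewrite scale1r. Qed.

Lemma sigZ n c (x : L n) : sig (c *: x) = c *: sig x.
Proof. by rewrite -mulr_algl sigM sigA mulr_algl. Qed.

Lemma sig_inj n (x y : L n) : sig x = sig y -> x = y.
Proof.
move=> e; apply/Keq_level; apply: g_inj.
apply: Keq_trans (sig_spec x) _; rewrite e; exact: Keq_sym (sig_spec y).
Qed.

Lemma sig_linear n : linear (@sig n).
Proof. by move=> c x y; rewrite sigD sigZ. Qed.

Definition sigL n : {linear L n -> L n} := mkLin (@sig_linear n).

Lemma sig_ahom n : ahom_in {:L n} (linfun (sigL n)).
Proof.
apply/ahom_inP; split => [x y _ _|]; rewrite !lfunE /=.
  exact: sigM.
exact: sig1.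
Qed.

Definition sigA' n : 'AHom(L n, L n) := AHom (sig_ahom n).

Lemma sigA'E n x : sigA' n x = sig x.
Proof. exact: (lfunE (sigL n)). Qed.

Lemma Keq_up n nu (h : (n <= nu)%N) (x : L n) :
  Keq (existT L nu (up n nu x)) (existT L n x).
Proof.
apply/(@Kequiv_at _ _ f (existT L nu (up n nu x)) (existT L n x) nu (leqnn nu) h).
by rewrite /= up_refl.
Qed.

Lemma sig_up n nu (h : (n <= nu)%N) (x : L n) : up n nu (sig x) = sig (up n nu x).
Proof.
apply/Keq_level.
apply: Keq_trans (Keq_up h _) _.
apply: Keq_trans (Keq_sym (sig_spec x)) _.
apply: Keq_trans (g_resp (Keq_sym (Keq_up h x))) _.
exact: sig_spec.
Qed.

Lemma sig_surj n (u : L n) : exists x, sig x = u.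
Proof.
have k0 : lker (linfun (sigL n)) == 0%VS.
  by apply/lker0P => x y; rewrite !lfunE /=; apply: sig_inj.
have : u \in limg (linfun (sigL n)) by rewrite lker0_limgf // memvf.
by case/memv_imgP => x _ ->; exists x; rewrite lfunE.
Qed.

Definition siginv n (u : L n) : L n := proj1_sig (constructive_indefinite_description _ (sig_surj u)).
Lemma siginvK n (u : L n) : sig (siginv u) = u.
Proof. exact: (proj2_sig (constructive_indefinite_description _ (sig_surj u))). Qed.

Lemma sig0 (d1 : \dim {:L 0} = 1%N) (x : L 0) : sig x = x.
Proof.
have E : (1%VS : {vspace L 0}) = fullv.
  by apply/eqP; rewrite eqEdim subvf d1 dimv1.
have : x \in (1%VS : {vspace L 0}) by rewrite E memvf.
by case/vlineP => c ->; rewrite sigZ sig1.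
Qed.


Local Notation Kb := (Kbar f).

Lemma sig_down n nu (h : (n <= nu)%N) (w : L nu) : sig (down n nu w) = down n nu (sig w).
Proof.
rewrite -!sigA'E (@down_sigma k L f hchar hgal n nu h (sigA' nu) (sigA' n)) //.
by move=> x; rewrite !sigA'E -!up_upA sig_up.
Qed.

Definition PhiF (y : Kb) n : L n := sig (sval y n).

Lemma Phi_pred (y : Kb) : Kbar_pred f (PhiF y).
Proof.
move=> n nu h; rewrite /PhiF -sig_down //; congr sig; exact: (svalP y).
Qed.

Definition Phi (y : Kb) : Kb := exist _ (PhiF y) (Phi_pred y).

Lemma iota_at a n R : (tag a <= R)%N -> (n <= R)%N ->
  Defs.iota f a n = down n R (val a R).
Proof.
move=> ha hn; rewrite /Defs.iota.
have hP : (maxn (tag a) n <= R)%N by rewrite geq_max ha hn.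
rewrite -(up_trans f _ (leq_maxl _ _) hP) [RHS](down_compat f hchar hgal) //.
exact: leq_maxr.
Qed.

Lemma iota_equiv a b n : Keq a b -> Defs.iota f a n = Defs.iota f b n.
Proof.
set R := maxn (maxn (tag a) (tag b)) n.
have ha : (tag a <= R)%N by rewrite !leq_max leqnn.
have hb : (tag b <= R)%N by rewrite !leq_max leqnn !orbT.
have hn : (n <= R)%N by rewrite !leq_max leqnn !orbT.
move/(@Kequiv_at _ _ f a b R ha hb) => e.
by rewrite (iota_at ha hn) (iota_at hb hn) e.
Qed.

Lemma Phi_extends : extends g Phi.
Proof.
move=> [N x] y ey; apply: functional_extensionality_dep => n.
rewrite /= /PhiF ey /Defs.iota /= sig_down ?leq_maxr // -sig_up ?leq_maxl //.
have := iota_equiv n (Keq_sym (sig_spec x)).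
by rewrite /Defs.iota /=.
Qed.

Lemma pairing_Phi n (u : L n) z :
  pairing (existT L n (sig u)) (Phi z) = pairing (existT L n u) z.
Proof.
rewrite /pairing /= /PhiF -sigM -sig_down //.
by rewrite (sig0 hd1).
Qed.


Lemma pair_Phi xi z :
  pairing xi (Phi z) = pairing (existT L (tag xi) (siginv (tagged xi))) z.
Proof. by case: xi => n u /=; rewrite -{1}(siginvK u) pairing_Phi. Qed.

Lemma Phi_wcont (R : realType) (v : k -> R) : wcont v Phi.
Proof.
move=> U hU y hy.
have [m [xi [V [oV Vy hV]]]] := hU (Phi y) hy.
exists m, (fun i => existT L (tag (xi i)) (siginv (tagged (xi i)))), V; split => //.
  by move=> i; rewrite -pair_Phi.
by move=> z hz; apply: hV => i; rewrite pair_Phi.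
Qed.

End GalAct.

Unset Implicit Arguments.
Theorem proposition2 (R : realType) (k : fieldType) (v : k -> R)
    (L : nat -> splittingFieldType k) (f : forall n, 'AHom(L n, L n.+1)) :
  nonarch_local_field_char0 v ->
  \dim {:L 0} = 1%N ->
  (forall n, galois 1%VS {:L n}) ->
  exists ext : (Kel L -> Kel L) -> Kbar f -> Kbar f,
    [/\ forall g, is_Gal f g ->
          [/\ wcont v (ext g), extends g (ext g)
            & forall Phi, wcont v Phi -> extends g Phi -> forall y, Phi y = ext g y],
        forall g h, is_Gal f g -> is_Gal f h ->
          forall y, ext (fun a => g (h a)) y = ext g (ext h y)
      & forall y, ext id y = y].
Proof.
move=> [v0 vM vU _ [_ _ hch]] hd1 hgal.
have hchar : forall m : nat, (0 < m)%N -> m%:R != 0 :> k.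
  by move=> m m0; rewrite (proj1 (pcharf0P k) hch) -lt0n.
pose P g (Phi : Kbar f -> Kbar f) := wcont v Phi /\ extends g Phi.
pose ext g := epsilon (inhabits (@id (Kbar f))) (P g).
have extP g : (exists Phi, P g Phi) -> P g (ext g).
  exact: epsilon_spec.
have uniq := @ext_unique k L f hchar hgal R v v0 vM vU.
have galP g : is_Gal f g -> P g (ext g).
  move=> gG; apply: extP.
  exists (@Phi k L f hchar hgal g gG); split.
    exact: (@Phi_wcont k L f hchar hgal g gG hd1 R v).
  exact: Phi_extends.
exists ext; split.
- move=> g gG; have [c e] := galP g gG; split => // Phi' c' e' y.
  exact: (uniq g Phi' (ext g) c' c e' e y).
- move=> g h gG hG y.
  have [cg eg] := galP g gG; have [ch eh] := galP h hG.
  have Pc : P (fun a => g (h a)) (fun y => ext g (ext h y)).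
    split.
      by move=> U hU; exact: (ch _ (cg U hU)).
    by move=> a z ez; apply: (eg (h a)); apply: eh.
  have [c e] := extP _ (ex_intro _ _ Pc).
  by apply: (uniq _ _ _ c Pc.1 e Pc.2).
- move=> y.
  have Pid : P id id by split => // U hU.
  have [c e] := extP _ (ex_intro _ _ Pid).
  by apply: (uniq _ _ _ c Pid.1 e Pid.2).
Qed.
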